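(* Let $m\ge0$ and $n\ge0$ be integers. Then the polynomial $\sum_{j=0}^n(-1)^jq^{mj}\begin{bmatrix} n\\ j\end{bmatrix}_{q^2}$ is divisible by $(q;q^2)_{\lfloor (n+1)/2\rfloor}$ in $\mathbb{Z}[q]$.
   Context: $q$ is an indeterminate. $(x;q)_n=\prod_{j=0}^{n-1}(1-q^jx)$. The Gaussian binomial coefficient is $\begin{bmatrix} n\\ j\end{bmatrix}_q=\frac{(q;q)_n}{(q;q)_j(q;q)_{n-j}}$ for $0\le j\le n$ (a polynomial in $q$), and $\begin{bmatrix} n\\ j\end{bmatrix}_{q^2}$ is this with $q$ replaced by $q^2$. *)

(* Defs.v *)
From HB Require Import structures.
From mathcomp Require Import all_boot all_order all_algebra.
Set Implicit Arguments. Unset Strict Implicit. Unset Printing Implicit Defensive.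
Import GRing.Theory.
Local Open Scope ring_scope.

Definition qpoch (x q : {poly int}) (n : nat) : {poly int} :=
  \prod_(j < n) (1 - q ^+ j * x).

(* The quotient is taken with polynomial division
   in {poly int}; the divisor has leading coefficient +-1 (a unit), so this is
   exact Euclidean division. *)
Definition qbinom (Q : {poly int}) (n j : nat) : {poly int} :=
  qpoch Q Q n %/ (qpoch Q Q j * qpoch Q Q (n - j)).

(* Main.v *)
Require Import Defs.
From HB Require Import structures.
From mathcomp Require Import all_boot all_order all_algebra.
From mathcomp Require Import ring zify.
Set Implicit Arguments. Unset Strict Implicit. Unset Printing Implicit Defensive.
Import GRing.Theory.
Local Open Scope ring_scope.

Section G.
Variable R : comPzRingType.
Variable Q : R.

Fixpoint gb (n j : nat) : R :=
 match n, j with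
 | 0, 0 => 1
 | 0, _.+1 => 0
 | n'.+1, 0 => 1
 | n'.+1, j'.+1 => gb n' j' + Q^+(j'.+1) * gb n' j'.+1
 end.

Lemma gb0 n : gb n 0 = 1. Proof. by case: n. Qed.

Lemma gb_gt n j : (n < j)%N -> gb n j = 0.
Proof.
elim: n j => [|n IH] [|j] //= H.
by rewrite !IH ?mulr0 ?addr0 // ltnW.
Qed.

Lemma gbnn n : gb n n = 1.
Proof. by elim: n => //= n ->; rewrite gb_gt // mulr0 addr0. Qed.

Lemma gb_ratio n j : (1 - Q^+(n - j)) * gb n j = (1 - Q^+j.+1) * gb n j.+1.
Proof.
elim: n j => [|n IH] j.
  by case: j => [|j] /=; rewrite ?expr0 ?subrr ?mul0r ?mulr0.
case: j => [|j].
  have := IH 0%N; rewrite !subn0 gb0 mulr1 /= gb0 mulr1 => E.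
  transitivity (1 - Q + Q * ((1 - Q ^+ 1) * gb n 1)); last by ring.
  by rewrite -E exprS; ring.
rewrite /= subSS.
case: (leqP n j) => Hj.
  rewrite (@gb_gt n j.+1) ?(@gb_gt n j.+2) //; try lia.
  have -> : (n - j)%N = 0%N by lia.
  rewrite expr0 subrr !mul0r; ring.
have E1 := IH j. have E2 := IH j.+1.
have e : (n - j)%N = (n - j.+1).+1 by lia.
rewrite e in E1 *.
set a := gb n j in E1 *; set b := gb n j.+1 in E1 E2 *; set c := gb n j.+2 in E2 *.
have k1 : Q ^+ j.+1 * Q^+(n - j.+1).+1 = Q^+j.+2 * Q^+(n - j.+1).
  by rewrite -!exprD; congr (_ ^+ _); lia.
transitivity ((1 - Q ^+ (n - j.+1).+1) * a + (Q ^+ j.+1 - Q ^+ j.+1 * Q ^+ (n - j.+1).+1) * b); first ring.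
transitivity ((1 - Q ^+ j.+2) * b + Q ^+ j.+2 * ((1 - Q ^+ j.+2) * c)); last ring.
rewrite E1 -E2 k1; ring.
Qed.

Lemma gb_pascal2 n j : gb n.+1 j.+1 = gb n j.+1 + Q^+(n - j) * gb n j.
Proof.
rewrite /=.
have := gb_ratio n j.
move=> E.
transitivity (gb n j + Q ^+ j.+1 * gb n j.+1 + ((1 - Q ^+ j.+1) * gb n j.+1 - (1 - Q ^+ (n - j)) * gb n j)).
  by rewrite E subrr addr0.
ring.
Qed.

Definition qp k := \prod_(i < k) (1 - Q ^+ i * Q).

Lemma qpS k : qp k.+1 = qp k * (1 - Q ^+ k * Q).
Proof. by rewrite /qp big_ord_recr. Qed.

Lemma gb_prod n j : (j <= n)%N -> gb n j * qp j * qp (n - j) = qp n.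
Proof.
elim: n j => [|n IH] [|j] //= H.
- by rewrite /qp !big_ord0 !mul1r.
- by rewrite /qp big_ord0 mulr1 mul1r subn0.
rewrite subSS.
case: (ltnP j n) => Hj.
  have E1 := IH j (ltnW Hj). have E2 := IH j.+1 Hj.
  have e : (n - j)%N = (n - j.+1).+1 by lia.
  rewrite e in E1 *.
  rewrite !qpS.
  have k1 : Q ^+ j.+1 * (Q ^+ (n - j.+1) * Q) = Q ^+ n * Q.
    by rewrite -!exprSr -exprD; congr (_ ^+ _); lia.
  transitivity ((gb n j * qp j * qp (n - j.+1).+1) * (1 - Q ^+ j * Q) +
     (gb n j.+1 * qp j.+1 * qp (n - j.+1)) * (Q ^+ j.+1 - Q ^+ j.+1 * (Q ^+ (n - j.+1) * Q))).
    by rewrite !qpS; ring.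
  rewrite E1 E2 k1 -exprSr; ring.
have -> : j = n by lia.
by rewrite gbnn gb_gt // mulr0 addr0 subnn /qp big_ord0 !mulr1 mul1r.
Qed.
End G.
Section P.
Variable R : comPzRingType.
Variable x : R.
Let Q := x ^+ 2.
Definition F n m j := (-1) ^+ j * x ^+ (m * j) * gb Q n j.
Definition A n m := \sum_(0 <= j < n.+1) F n m j.

Lemma F_gt n m j : (n < j)%N -> F n m j = 0.
Proof. by move=> h; rewrite /F gb_gt // mulr0. Qed.

Lemma ext n m : \sum_(0 <= i < n) F n m i.+1 = \sum_(0 <= i < n.+1) F n m i.+1.
Proof. by rewrite big_nat_recr //= F_gt // addr0. Qed.

Lemma P1 n m : A n.+1 m = A n m.+2 - x ^+ m * A n m.
Proof.
rewrite /A big_nat_recl // [X in _ = X - _]big_nat_recl //.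
rewrite (ext n m.+2) mulr_sumr.
have -> : F n.+1 m 0 = F n m.+2 0 by rewrite /F !muln0 !gb0.
rewrite -addrA; congr (_ + _).
rewrite -sumrB; apply: eq_bigr => j _.
rewrite /F /=.
have e1 : x ^+ (m * j.+1) = x ^+ m * x ^+ (m * j) by rewrite -exprD; congr (_ ^+ _); lia.
have e2 : x ^+ (m * j.+1) * Q ^+ j.+1 = x ^+ (m.+2 * j.+1)
  by rewrite /Q -exprM -exprD; congr (_ ^+ _); lia.
rewrite -e2 e1 !exprS; ring.
Qed.

Lemma P2 n m : A n.+1 m.+2 = A n m.+2 - x ^+ (m.+2 + n.*2) * A n m.
Proof.
rewrite /A big_nat_recl // [X in _ = X - _]big_nat_recl //.
rewrite (ext n m.+2) mulr_sumr.
have -> : F n.+1 m.+2 0 = F n m.+2 0 by rewrite /F !muln0 !gb0.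
rewrite -addrA; congr (_ + _).
rewrite -sumrB; apply: eq_big_nat => j /andP [_ hj].
rewrite /F gb_pascal2.
have e : x ^+ (m.+2 * j.+1) * Q ^+ (n - j) = x ^+ (m.+2 + n.*2) * x ^+ (m * j)
  by rewrite /Q -exprM -!exprD; congr (_ ^+ _); lia.
rewrite exprS mulrDr.
set a := x ^+ (m.+2 * j.+1); set b := Q ^+ (n - j); set c := x ^+ (m.+2 + n.*2).
set d := x ^+ (m * j); set s := (-1) ^+ j; set g1 := gb Q n j.+1; set g0 := gb Q n j.
have e' : a * b = c * d by [].
transitivity (-1 * s * a * g1 + -1 * s * g0 * (a * b)); first ring.
rewrite e'; ring.
Qed.

Lemma T3 n m : A n.+2 m = (1 - x ^+ m) * A n.+1 m + x ^+ m * (1 - x ^+ (n.+1).*2) * A n m.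
Proof.
rewrite P1 P2 (P1 n m).
have -> : x ^+ (m.+2 + n.*2) = x ^+ m * x ^+ (n.+1).*2 by rewrite -exprD; congr (_ ^+ _); lia.
ring.
Qed.

End P.
Section D.
Variable R : comPzRingType.
Variable x : R.

Definition dv (a b : R) := exists r, b = r * a.
Lemma dv_add a b c : dv a b -> dv a c -> dv a (b + c).
Proof. by move=> [r ->] [s ->]; exists (r + s); ring. Qed.
Lemma dv_mull a b c : dv a c -> dv a (b * c).
Proof. by move=> [r ->]; exists (b * r); ring. Qed.
Lemma dv_trans a b c : dv a b -> dv b c -> dv a c.
Proof. by move=> [r ->] [s ->]; exists (s * r); ring. Qed.
Lemma dv_refl a : dv a a. Proof. by exists 1; ring. Qed.
Lemma dv0 a : dv a 0. Proof. by exists 0; ring. Qed.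

Definition Dk k := \prod_(i < k) (1 - (x ^+ 2) ^+ i * x).
Lemma DkS k : Dk k.+1 = Dk k * (1 - (x ^+ 2) ^+ k * x).
Proof. by rewrite /Dk big_ord_recr. Qed.

Lemma Dk_mono a b : (a <= b)%N -> dv (Dk a) (Dk b).
Proof.
elim: b => [|b IH]; first by rewrite leqn0 => /eqP ->; apply: dv_refl.
rewrite leq_eqVlt => /orP [/eqP -> | h]; first by apply: dv_refl.
apply: dv_trans (IH h) _; rewrite DkS mulrC; apply: dv_mull; apply: dv_refl.
Qed.

Lemma parity (P : nat -> nat -> Prop) :
  (forall k, P (k.*2) k) -> (forall k, P (k.*2.+1) k.+1) -> forall n, P n (n.+1)./2.
Proof.
move=> He Ho n; case/boolP: (odd n) => h.
  have -> : n = (n./2).*2.+1 by rewrite -[n in LHS]odd_double_half h.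
  set k := n./2.
  by rewrite -[(k.*2.+2)]/((k.+1).*2) doubleK; apply: Ho.
have -> : n = (n./2).*2 by rewrite -[n in LHS]odd_double_half (negbTE h).
set k := n./2.
by rewrite -[(k.*2.+1)./2]/(uphalf k.*2) uphalf_double; apply: He.
Qed.

Local Notation A := (A x).

Lemma Dn_mono n : dv (Dk (n.+1)./2) (Dk (n.+2)./2).
Proof. by apply: Dk_mono; apply: half_leq. Qed.

Lemma A00 : A 0 0 = 1.
Proof. by rewrite /A big_nat1 /F /= mulr1 expr0 mul1r. Qed.
Lemma A10 : A 1 0 = 0.
Proof. rewrite /A big_nat_recr // big_nat1 /F /=. ring. Qed.
Lemma A01 : A 0 1 = 1.
Proof. by rewrite /A big_nat1 /F /= mulr1 expr0 mul1r. Qed.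
Lemma A11 : A 1 1 = 1 - x.
Proof. rewrite /A big_nat_recr // big_nat1 /F /=. ring. Qed.

Lemma base0 n : dv (Dk (n.+1)./2) (A n 0).
Proof.
have H : forall k, A (k.*2.+1) 0 = 0 /\ dv (Dk k) (A k.*2 0).
  elim=> [|k [IH1 IH2]]; first by rewrite A10 A00 /Dk big_ord0; split=> //; apply: dv_refl.
  have e : A (k.+1).*2.+1 0 = 0.
    by rewrite T3 IH1 expr0 subrr; ring.
  split=> //.
  rewrite T3 IH1 expr0 subrr mul0r add0r mul1r DkS.
  have -> : x ^+ (k.*2.+1).*2 = ((x ^+ 2) ^+ k * x) * ((x ^+ 2) ^+ k * x).
    by rewrite -exprM -exprSr -exprD; congr (_ ^+ _); lia.
  case: IH2 => r ->; exists ((1 + (x ^+ 2) ^+ k * x) * r); ring.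
apply: (@parity (fun n k => dv (Dk k) (A n 0)) _ _ n) => k; first by case: (H k).
by case: (H k) => -> _; apply: dv0.
Qed.

Definition Pi n := \prod_(i < n) (1 + (- x) ^+ i.+1).

Lemma A1closed n : A n 1 = Pi n /\ A n.+1 1 = Pi n.+1.
Proof.
elim: n => [|n [IH1 IH2]].
  by rewrite A01 A11 /Pi big_ord0 big_ord1 expr1; split=> //; ring.
split=> //.
rewrite T3 IH1 IH2 /Pi !big_ord_recr /=.
set a := (- x) ^+ n.+1.
have -> : (- x) ^+ n.+2 = - x * a by rewrite exprS.
have -> : x ^+ (n.+1).*2 = a * a.
  by rewrite /a -exprD addnn -!muln2 mulnC exprM exprM sqrrN.
clearbody a; ring.
Qed.

Lemma base1 n : dv (Dk (n.+1)./2) (A n 1).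
Proof.
rewrite (proj1 (A1closed n)).
have Ho : forall k, dv (Dk k.+1) (Pi k.*2.+1).
  elim=> [|k IH].
    rewrite /Pi /Dk !big_ord1 expr0 mul1r expr1; apply: dv_refl.
  have -> : Pi (k.+1).*2.+1 = Pi k.*2.+1 * (1 + (- x) ^+ k.*2.+2) * (1 + (- x) ^+ k.*2.+3).
    by rewrite /Pi !big_ord_recr.
  rewrite DkS.
  have -> : (- x) ^+ k.*2.+3 = - ((x ^+ 2) ^+ k.+1 * x).
    by rewrite exprSr -[k.*2.+2]/((k.+1).*2) -muln2 mulnC exprM sqrrN mulrN.
  case: IH => r ->; exists (r * (1 + (- x) ^+ k.*2.+2)); ring.
apply: (@parity (fun n k => dv (Dk k) (Pi n)) _ _ n) => // k.
case: k => [|k]; first by rewrite /Pi /Dk !big_ord0; apply: dv_refl.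
apply: (dv_trans (Ho k)); rewrite /Pi [X in dv _ X]big_ord_recr /= mulrC; apply: dv_mull.
by rewrite /Pi; apply: dv_refl.
Qed.
Lemma allm m n : dv (Dk (n.+1)./2) (A n m).
Proof.
have H : forall m, (forall n, dv (Dk (n.+1)./2) (A n m)) /\ (forall n, dv (Dk (n.+1)./2) (A n m.+1)).
  clear m n; elim=> [|m [IH1 IH2]]; first by split; [apply base0 | apply base1].
  split=> // n.
  have -> : A n m.+2 = A n.+1 m + x ^+ m * A n m by rewrite P1; ring.
  apply: dv_add; last by apply: dv_mull.
  exact: dv_trans (Dn_mono n) (IH1 n.+1).
by case: (H m) => h _; apply: h.
Qed.
End D.

Lemma lc_qp k : lead_coef (qp ('X^2 : {poly int}) k) = (-1) ^+ k.
Proof.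
rewrite /qp lead_coef_prod (eq_bigr (fun _ => -1)) ?prodr_const ?card_ord // => i _.
by rewrite -exprM -exprD -opprB lead_coefN -polyC1 lead_coefXnsubC // addn2.
Qed.

Lemma qbinom_gb n j : (j <= n)%N -> qbinom ('X^2) n j = gb ('X^2 : {poly int}) n j.
Proof.
move=> hj; rewrite /qbinom.
have -> : qpoch ('X^2) ('X^2) n = qp ('X^2 : {poly int}) n by [].
rewrite -(gb_prod _ hj) -mulrA.
apply: Pdiv.IdomainUnit.mulpK.
by rewrite lead_coefM !lc_qp -exprD unitrX // unitrN1.
Qed.

Theorem corollary2p3 (m n : nat) :
  exists r : {poly int},
    \sum_(j < n.+1) (-1) ^+ j * 'X ^+ (m * j) * qbinom ('X ^+ 2) n j
    = r * qpoch 'X ('X ^+ 2) (n.+1)./2.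
Proof.
have [r hr] := allm ('X : {poly int}) m n.
exists r; rewrite -[RHS]hr /A big_mkord; apply: eq_bigr => j _.
by rewrite /F qbinom_gb // -ltnS.
Qed.
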